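(* Let $p$ be a prime with $p\equiv 1\pmod 3$. Then, for every integer $x$, $$(x^2+x+1)^{p-2}\equiv 1+\frac23x^{p-1}-\frac13x^{p-2}+\sum_{k=2}^{p-2}\left(k\left(\frac k3\right)+[3\mid k-1]-\frac13\right)x^{k-1}\pmod p,$$ equivalently the two sides agree in $\mathbb F_p[x]$ modulo $x^p-x$.
   Context: Here $\left(\frac{k}{3}\right)$ is the Legendre symbol modulo $3$ (equal to $0,1,-1$ according as $k\equiv 0,1,2\pmod 3$). For an assertion $A$, $[A]=1$ if $A$ holds and $[A]=0$ otherwise. The rational numbers $\frac13,\frac23$ are interpreted as elements of $\mathbb Z/p\mathbb Z$ (as $p\neq 3$), i.e., the congruence is in the ring of rationals with denominator prime to $p$. *)

(* Defs.v *)
From mathcomp Require Import all_boot all_order all_algebra.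
Set Implicit Arguments. Unset Strict Implicit. Unset Printing Implicit Defensive.
Import Order.TTheory GRing.Theory Num.Theory.

Definition leg3 (k : nat) : int :=
  if (k %% 3 == 0)%N then 0%R else if (k %% 3 == 1)%N then 1%R else (-1)%R.

(* Main.v *)
Require Import Defs.
From mathcomp Require Import all_boot all_order all_algebra all_field.
From mathcomp Require Import ring lra zify.
Import Order.TTheory GRing.Theory Num.Theory.
Local Open Scope ring_scope.

Section Gen.
Variable F : fieldType.
Hypothesis h3 : (3 : F) != 0.

Definition g (k : nat) : F :=
  k%:R * (leg3 k)%:~R + (3 %| k - 1)%N%:R - 1 / 3.
Definition G (n : nat) (x : F) := \sum_(1 <= k < n.+1) g k * x ^+ (k - 1).

Lemma g1 m : g (3 * m + 2) = - ((3 * m + 1)%:R + 1) - 1/3.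
Proof.
rewrite /g /leg3.
have -> : ((3 * m + 2) %% 3 = 2)%N by rewrite mulnC modnMDl.
have -> : (3 %| 3 * m + 2 - 1)%N = false.
  rewrite (_ : 3 * m + 2 - 1 = m * 3 + 1)%N; last by lia.
  by rewrite /dvdn modnMDl.
rewrite /= natrD mulrN1 natrD.
ring.
Qed.

Lemma g2 m : g (3 * m + 3) = - 1/3.
Proof.
rewrite /g /leg3.
have -> : ((3 * m + 3) %% 3 = 0)%N by rewrite (_ : 3 * m + 3 = m.+1 * 3)%N ?modnMl //; lia.
have -> : (3 %| 3 * m + 3 - 1)%N = false.
  rewrite (_ : 3 * m + 3 - 1 = m * 3 + 2)%N; last by lia.
  by rewrite /dvdn modnMDl.
rewrite /= mulr0. ring.
Qed.

Lemma g3 m : g (3 * m + 4) = ((3 * m + 1)%:R + 3) + 1 - 1/3.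
Proof.
rewrite /g /leg3.
have -> : ((3 * m + 4) %% 3 = 1)%N by rewrite (_ : 3 * m + 4 = m.+1 * 3 + 1)%N ?modnMDl //; lia.
have -> : (3 %| 3 * m + 4 - 1)%N = true.
  rewrite (_ : 3 * m + 4 - 1 = m.+1 * 3)%N; last by lia.
  by rewrite /dvdn modnMl.
rewrite /= mulr1 !natrD. ring.
Qed.

Lemma GS n (x : F) : G n.+1 x = G n x + g n.+1 * x ^+ n.
Proof. by rewrite /G big_nat_recr //= subSS subn0. Qed.

Lemma GS' n k (x : F) : k = n.+1 -> G k x = G n x + g k * x ^+ n.
Proof. by move=> ->; exact: GS. Qed.

Lemma G0 m (x : F) : G (3 * m.+1 + 1) x =
  G (3 * m + 1) x + x ^+ (3 * m + 1) * (g (3 * m + 2) + g (3 * m + 3) * x + g (3 * m + 4) * x ^+ 2).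
Proof.
rewrite (_ : 3 * m.+1 + 1 = (3 * m + 1).+3)%N; last by lia.
rewrite !GS.
rewrite (_ : ((3 * m + 1).+1 = 3 * m + 2)%N); last by lia.
rewrite (_ : ((3 * m + 2).+1 = 3 * m + 3)%N); last by lia.
rewrite (_ : ((3 * m + 3).+1 = 3 * m + 4)%N); last by lia.
rewrite (_ : 3 * m + 2 = (3 * m + 1) + 1)%N; last by lia.
rewrite (_ : 3 * m + 3 = (3 * m + 1) + 2)%N; last by lia.
rewrite !(exprD _ (3 * m + 1)).
rewrite (_ : (3 * m + 1 + 1 = 3 * m + 2)%N); last by lia.
rewrite (_ : (3 * m + 1 + 2 = 3 * m + 3)%N); last by lia.
set y := x ^+ (3 * m + 1). ring.
Qed.

Definition Lp (x : F) := 5/3 - 7/3 * x - 1/3 * x^+2 + 4/3 * x^+3 - 2/3 * x^+4 + 1/3 * x^+5.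
Definition Hp (n x : F) := (n + 4/3) + 1/3 * x - (n + 11/3) * x^+2 - (n - 5/3) * x^+3
   - 1/3 * x^+4 + (n + 2/3) * x^+5.

Lemma lemA m (x : F) : (1 - x ^+ 3) ^+ 2 * G (3 * m + 1) x =
   Lp x + x ^+ (3 * m + 1) * Hp (3 * m + 1)%:R x.
Proof.
elim: m => [|m IH].
  rewrite /G big_nat1 /g /leg3 /= /Lp /Hp. field => //.
rewrite G0 mulrDr IH g1 g2 g3.
have -> : (3 * m.+1 + 1 = (3 * m + 1) + 3)%N by lia.
rewrite (natrD _ (3 * m + 1) 3) (exprD _ (3 * m + 1) 3).
set y := x ^+ (3 * m + 1); set n := (3 * m + 1)%:R.
rewrite /Lp /Hp. field => //.
Qed.

Lemma lemB m (x : F) : x ^+ 3 = 1 -> 2 * G (3 * m + 1) x =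
  m%:R * (3 * m%:R - 1) * (1 - x) + 2 * m%:R * (2/3 - 4/3 * x - 1/3 * x^+2)
  + 2 * ((3 * m + 1)%:R + 2/3).
Proof.
move=> hx.
elim: m => [|m IH].
  rewrite /G big_nat1 /g /leg3 /=. field => //.
rewrite G0 mulrDr IH g1 g2 g3.
have E : forall a b c : F, x ^+ (3 * m + 1) * (a + b * x + c * x ^+ 2) = c + a * x + b * x ^+ 2.
  move=> a b c; rewrite exprD exprM hx expr1n mul1r.
  transitivity (c * x ^+ 3 + a * x + b * x ^+ 2); first by ring.
  by rewrite hx mulr1.
rewrite E.
have -> : (3 * m.+1 + 1 = (3 * m + 1) + 3)%N by lia.
rewrite -[m.+1]addn1 !natrD ?natrM.
field => //.
Qed.

End Gen.
Arguments G {F}. Arguments g {F}. Arguments Lp {F}. Arguments Hp {F}.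
Arguments GS {F}. Arguments GS' {F}. Arguments lemA {F}. Arguments lemB {F}.

Lemma ne0 (p n : nat) : prime p -> (p %% 3 = 1)%N -> (0 < n <= 3)%N -> (n%:R : 'F_p) != 0.
Proof.
move=> hp hp3 hn.
rewrite -(dvdn_pcharf (pchar_Fp hp)).
apply/negP => hd.
have := dvdn_leq (_ : 0 < n)%N hd.
have := prime_gt1 hp.
case: n hn hd => // n hn hd.
move=> h1 h2.
have : (p = 2 \/ p = 3)%N by lia.
case=> ?; subst p => //.
Qed.

Theorem corollary2p1 (p : nat) (hp : prime p) (hp3 : (p %% 3 = 1)%N) (x : int) :
  ((x%:~R : 'F_p) ^+ 2 + x%:~R + 1) ^+ (p - 2) =
    1 + 2 / 3 * (x%:~R : 'F_p) ^+ (p - 1) - 1 / 3 * (x%:~R : 'F_p) ^+ (p - 2)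
    + \sum_(2 <= k < p.-1)
        ((k%:R * (leg3 k)%:~R + (3 %| k - 1)%N%:R - 1 / 3) * (x%:~R : 'F_p) ^+ (k - 1)).
Proof.
have h3 : (3 : 'F_p) != 0 by apply: ne0.
have h2 : (2 : 'F_p) != 0 by apply: ne0.
have h9 : (9 : 'F_p) != 0.
  by rewrite (_ : (9 : 'F_p) = 3 * 3) ?mulf_neq0 //; ring.
set m := (p %/ 3)%N.
have hpm : p = (3 * m + 1)%N by rewrite /m; lia.
have hp7 : (7 <= p)%N.
  have := prime_gt1 hp.
  have : p <> 4%N by move=> e; rewrite e in hp.
  lia.
have p0 : (p%:R : 'F_p) = 0 := pchar_Fp_0 hp.
have ferm : forall y : 'F_p, y ^+ p = y.
  by move=> y; rewrite -[X in y ^+ X](card_Fp hp); exact: expf_card.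
set y := (x%:~R : 'F_p).
have hS : 1 + 2 / 3 * y ^+ (p - 1) - 1 / 3 * y ^+ (p - 2)
    + \sum_(2 <= k < p.-1) ((k%:R * (leg3 k)%:~R + (3 %| k - 1)%N%:R - 1 / 3) * y ^+ (k - 1))
    = G p y - 2/3.
  have e1 : p = (p.-1).+1 by lia.
  rewrite (GS' p.-1 p y e1).
  have e2 : p.-1 = (p.-2).+1 by lia.
  rewrite (GS' p.-2 p.-1 y e2).
  rewrite /G -e2 (@big_ltn _ _ _ 1); last by lia.
  have gp : g p = 1 - 1/3 :> 'F_p.
    rewrite /g p0 mul0r add0r.
    have -> : (3 %| p - 1)%N by rewrite hpm addnK dvdn_mulr.
    by [].
  have gp1 : g p.-1 = - (1/3) :> 'F_p.
    rewrite /g /leg3.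
    have -> : (p.-1 %% 3 = 0)%N by rewrite hpm addn1 /= mulnC modnMl.
    have -> : (3 %| p.-1 - 1)%N = false.
      rewrite (_ : p.-1 - 1 = (m - 1) * 3 + 2)%N; last by lia.
      by rewrite /dvdn modnMDl.
    rewrite /= mulr0 add0r add0r; ring.
  have g1' : g 1 = 5/3 :> 'F_p by rewrite /g /leg3 /=; field => //.
  rewrite gp gp1 g1' (_ : p.-2 = p - 2)%N; last by lia.
  rewrite (_ : p.-1 = p - 1)%N; last by lia.
  rewrite /g subnn expr0. field => //.
rewrite hS.
set q := y ^+ 2 + y + 1.
have hm : (m%:R : 'F_p) = - (1/3).
  have : ((3 * m + 1)%:R : 'F_p) = 0 by rewrite -hpm.
  rewrite natrD natrM => e.
  apply: (mulfI h3); rewrite -[3 * m%:R](addrK 1) e; field => //.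
case: (eqVneq (y ^+ 3) 1) => hy.
- have B := lemB h3 m y hy.
  rewrite -hpm p0 hm in B.
  have hq2 : q ^+ 2 = 3 * q.
    apply/eqP; rewrite -subr_eq0; apply/eqP.
    transitivity ((y ^+ 3 - 1) * (y + 2)); first by rewrite /q; ring.
    by rewrite hy subrr mul0r.
  have hqk : forall k, q ^+ k.+1 = 3 ^+ k * q.
    elim=> [|k IH]; first by rewrite expr1 expr0 mul1r.
    by rewrite exprS IH mulrA (mulrC q) -mulrA -expr2 hq2 mulrA -exprSr.
  have f3 : (3 : 'F_p) ^+ (p - 1) = 1.
    apply: (mulIf h3); rewrite mul1r -exprSr (_ : (p - 1).+1 = p)%N; last by lia.
    exact: ferm.
  have t9 : (3 : 'F_p) ^+ (p - 3) = 1 / 9.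
    have : (3 : 'F_p) ^+ (p - 3) * 3 ^+ 2 = 1.
      by rewrite -exprD (_ : (p - 3 + 2) = p - 1)%N ?f3 //; lia.
    move=> e; apply: (mulIf (_ : (3 : 'F_p) ^+ 2 != 0)); first by rewrite expf_neq0.
    rewrite e; field; by rewrite ?h3 ?h9.
  rewrite (_ : p - 2 = (p - 3).+1)%N; last by lia.
  rewrite hqk t9.
  have -> : G p y = (1/2) * (2 * G p y) by field => //.
  rewrite B /q. field; by rewrite ?h2 ?h3 ?h9.
- have A := lemA h3 m y.
  rewrite -hpm p0 ferm in A.
  have hq : (1 - y ^+ 3) ^+ 2 * q ^+ (p - 2) = (1 - y) * (1 - y ^+ 3).
    transitivity ((1 - y) ^+ 2 * q ^+ (2 + (p - 2))).
      by rewrite exprD /q; ring.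
    rewrite (_ : 2 + (p - 2) = p)%N; last by lia.
    by rewrite ferm /q; ring.
  have nz : (1 - y ^+ 3) ^+ 2 != 0.
    by apply: expf_neq0; rewrite subr_eq0 eq_sym.
  apply: (mulfI nz); rewrite hq [RHS]mulrBr A /Lp /Hp. field; by rewrite ?h2 ?h3 ?h9.
Qed.
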